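(* Let $\Omega=\{\omega_1,\dots,\omega_N\}$ be a finite set with probabilities $p_i\in(0,1]$, $\sum_{i=1}^N p_i=1$. Let $C\in\mathbb{R}^{d\times n}$, $A\in\mathbb{R}^{k\times n}$, $b\in\mathbb{R}^k$, and for each $i$ let $Q_i\in\mathbb{R}^{d\times m}$, $T_i\in\mathbb{R}^{\ell\times n}$, $W_i\in\mathbb{R}^{\ell\times m}$, $u^i\in\mathbb{R}^\ell$. Let $\mathcal{P}^{RP}:=\{Cx+\sum_{i=1}^Np_iQ_iy^i \mid Ax=b,\ T_ix+W_iy^i=u^i\ (i=1,\dots,N),\ x\ge0,\ y^1,\dots,y^N\ge0\}+\mathbb{R}^d_+$ be the upper image of the recourse problem, and with $\bar Q:=\sum_ip_iQ_i$, $\bar T:=\sum_ip_iT_i$, $\bar W:=\sum_ip_iW_i$, $\bar u:=\sum_ip_iu^i$ let $\mathcal{P}^{EV}:=\{Cx+\bar Qy\mid Ax=b,\ \bar Tx+\bar Wy=\bar u,\ x\ge0,\ y\ge0\}+\mathbb{R}^d_+$ be the upper image of the expected value problem. If $Q_1=\dots=Q_N$ and $W_1=\dots=W_N$, then $\mathcal{P}^{EV}\supseteq\mathcal{P}^{RP}$.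
   Context: Here $x\in\mathbb{R}^n$, $y,y^i\in\mathbb{R}^m$, inequalities on vectors are componentwise, and $+\mathbb{R}^d_+$ denotes Minkowski addition of the nonnegative orthant. *)

(* Defs.v *)
From mathcomp Require Import all_boot all_order all_algebra.
From mathcomp Require Import reals.
Set Implicit Arguments. Unset Strict Implicit. Unset Printing Implicit Defensive.
Import Order.TTheory GRing.Theory Num.Theory.
Local Open Scope ring_scope.

Definition vnonneg (R : realType) (m : nat) (v : 'cV[R]_m) : Prop :=
  forall i, 0 <= v i 0.

Definition vle (R : realType) (m : nat) (u v : 'cV[R]_m) : Prop :=
  forall i, u i 0 <= v i 0.

Definition upper_image_RP (R : realType) (N d n m k l : nat)
  (p : 'I_N -> R) (C : 'M[R]_(d, n)) (A : 'M[R]_(k, n)) (b : 'cV[R]_k)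
  (Q : 'I_N -> 'M[R]_(d, m)) (T : 'I_N -> 'M[R]_(l, n))
  (W : 'I_N -> 'M[R]_(l, m)) (u : 'I_N -> 'cV[R]_l) (z : 'cV[R]_d) : Prop :=
  exists (x : 'cV[R]_n) (y : 'I_N -> 'cV[R]_m),
    [/\ A *m x = b,
        (forall i, T i *m x + W i *m y i = u i),
        vnonneg x,
        (forall i, vnonneg (y i)) &
        vle (C *m x + \sum_(i < N) p i *: (Q i *m y i)) z].

Definition upper_image_EV (R : realType) (N d n m k l : nat)
  (p : 'I_N -> R) (C : 'M[R]_(d, n)) (A : 'M[R]_(k, n)) (b : 'cV[R]_k)
  (Q : 'I_N -> 'M[R]_(d, m)) (T : 'I_N -> 'M[R]_(l, n))
  (W : 'I_N -> 'M[R]_(l, m)) (u : 'I_N -> 'cV[R]_l) (z : 'cV[R]_d) : Prop :=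
  let Qbar := \sum_(i < N) p i *: Q i in
  let Tbar := \sum_(i < N) p i *: T i in
  let Wbar := \sum_(i < N) p i *: W i in
  let ubar := \sum_(i < N) p i *: u i in
  exists (x : 'cV[R]_n) (y : 'cV[R]_m),
    [/\ A *m x = b,
        Tbar *m x + Wbar *m y = ubar,
        vnonneg x,
        vnonneg y &
        vle (C *m x + Qbar *m y) z].

(* Main.v *)
Require Import Defs.
From mathcomp Require Import all_boot all_order all_algebra.
From mathcomp Require Import reals.
Import Order.TTheory GRing.Theory Num.Theory.
Local Open Scope ring_scope.

Theorem proposition6p1 (R : realType) (N d n m k l : nat)
  (p : 'I_N -> R) (C : 'M[R]_(d, n)) (A : 'M[R]_(k, n)) (b : 'cV[R]_k)
  (Q : 'I_N -> 'M[R]_(d, m)) (T : 'I_N -> 'M[R]_(l, n))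
  (W : 'I_N -> 'M[R]_(l, m)) (u : 'I_N -> 'cV[R]_l) :
  (forall i, 0 < p i <= 1) ->
  \sum_(i < N) p i = 1 ->
  (forall i j, Q i = Q j) ->
  (forall i j, W i = W j) ->
  forall z : 'cV[R]_d,
    upper_image_RP p C A b Q T W u z -> upper_image_EV p C A b Q T W u z.
Proof.
move=> hp hs hQ hW z [x [y [hA hT hx hy hz]]].
case: N p Q T W u hp hs hQ hW y hT hy hz => [|N'] p Q T W u hp hs hQ hW y hT hy hz.
  by move: hs; rewrite big_ord0 => /eqP; rewrite eq_sym oner_eq0.
set i0 : 'I_N'.+1 := ord0.
have EW : \sum_(i < N'.+1) p i *: W i = W i0.
  by rewrite (eq_bigr (fun i => p i *: W i0)) -?scaler_suml ?hs ?scale1r // => i _; rewrite (hW i i0).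
have EQ : \sum_(i < N'.+1) p i *: Q i = Q i0.
  by rewrite (eq_bigr (fun i => p i *: Q i0)) -?scaler_suml ?hs ?scale1r // => i _; rewrite (hQ i i0).
exists x, (\sum_(i < N'.+1) p i *: y i); split => //=.
- rewrite EW mulmx_suml mulmx_sumr -big_split /=.
  apply: eq_bigr => i _; rewrite -scalemxAl -scalemxAr -scalerDr (hW i0 i) hT //.
- move=> j; rewrite summxE; apply: sumr_ge0 => i _; rewrite mxE.
  apply: mulr_ge0; [by case/andP: (hp i) => /ltW|exact: hy].
- rewrite EQ mulmx_sumr.
  rewrite (eq_bigr (fun i => p i *: (Q i *m y i))) //.
  by move=> i _; rewrite scalemxAr (hQ i0 i).
Qed.
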